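(* Suppose that $\mathcal G$ is a space group and $\mathcal R\subset\mathcal G$ has Property 2. Then $\ker(\|\cdot\|_{\mathcal R})=U_{\mathrm{trans}}$.
   Context: Euclidean group: $\mathrm E(n)$ consists of pairs $(A|b)$, $A\in\mathrm O(n)$, $b\in\mathbb R^n$, acting by $(A|b)\cdot x=Ax+b$, product $(A_1|b_1)(A_2|b_2)=(A_1A_2|b_1+A_1b_2)$; $\mathrm{rot}(A|b)=A$. A space group in $\mathrm E(n)$ is a discrete subgroup (all orbits discrete) containing $n$ translations $(I|b)$ with linearly independent $b$'s. Standing setting: $d=d_1+d_2$; $\mathcal S<\mathrm E(d_2)$ is a space group with translation subgroup $\mathcal T_{\mathcal S}$; $A\oplus(B|b)=(\mathrm{diag}(A,B)|(0,b))$; $\mathcal G$ is a discrete subgroup of $\mathrm E(d)$ contained in $\{A\oplus s:A\in\mathrm O(d_1),s\in\mathcal S\}$ projecting onto $\mathcal S$; $\mathcal T\subset\mathcal G$ maps bijectively onto $\mathcal T_{\mathcal S}$. There is $m_0\in\mathbb N$ such that $\mathcal T^N=\{t^N:t\in\mathcal T\}$ is a normal subgroup iff $N\in\mathcal M=m_0\mathbb N$, then isomorphic to $\mathbb Z^{d_2}$ of finite index; $\mathcal C_N$ is a fixed set of representatives of $\mathcal G/\mathcal T^N$. $U_{\mathrm{per}}$: maps $u:\mathcal G\to\mathbb R^d$ that are $\mathcal T^N$-periodic for some $N\in\mathcal M$. $x_0\in\mathbb R^d$ with $g\mapsto g\cdot x_0$ injective; $d_{\mathrm{aff}}=\dim\mathrm{aff}(\mathcal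 G\cdot x_0)$; assumed $\mathcal G\cdot x_0\subset\{0_{d-d_{\mathrm{aff}}}\}\times\mathbb R^{d_{\mathrm{aff}}}$ and $\mathcal G$ acts trivially on $\mathbb R^{d-d_{\mathrm{aff}}}\times\{0\}$. $U_{\mathrm{iso}}(\mathcal R)$: maps $v:\mathcal R\to\mathbb R^d$ with $a\in\mathbb R^d$, $S\in\mathrm{Skew}(d)$ such that $\mathrm{rot}(g)v(g)=a+S(g\cdot x_0-x_0)$ on $\mathcal R$. For finite $\mathcal R$ and $\mathcal T^N$-periodic $u$: $\|u\|_{\mathcal R}=\big(\frac1{|\mathcal C_N|}\sum_{g\in\mathcal C_N}\mathrm{dist}(u(g\,\cdot)|_{\mathcal R},U_{\mathrm{iso}}(\mathcal R))^2\big)^{1/2}$. $U_{\mathrm{trans}}$ is the set of maps $u:\mathcal G\to\mathbb R^d$ such that there is $a\in\mathbb R^d$ with $\mathrm{rot}(g)u(g)=a$ for all $g\in\mathcal G$. Property 1: $\mathcal R$ finite, $\mathrm{id}\in\mathcal R$, $\mathrm{aff}(\mathcal R\cdot x_0)=\mathrm{aff}(\mathcal G\cdot x_0)$. Property 2: $\mathcal R$ finite, and there are $\mathcal R',\mathcal R''$ with $\mathrm{id}\in\mathcal R'$, $\mathcal R'$ generating $\mathcal G$, $\mathcal R''$ with Property 1, and $\{gh:g\in\mathcal R',h\in\mathcal R''\}\subset\mathcal R$. *)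

(* Defs.v *)
From mathcomp Require Import all_boot all_order all_algebra.
From mathcomp Require Import boolp classical_sets reals.
Set Implicit Arguments. Unset Strict Implicit. Unset Printing Implicit Defensive.
Import Order.TTheory GRing.Theory Num.Theory.
Local Open Scope ring_scope.
Local Open Scope classical_set_scope.

Section Euclid.
Variables (R : realType) (d : nat).

(* An element (A|b) of E(d), acting by x |-> A x + b on column vectors. *)
Definition Eucl := ('M[R]_d * 'cV[R]_d)%type.

Definition orthogonal (A : 'M[R]_d) : Prop := A^T *m A = 1%:M.
Definition skew (S : 'M[R]_d) : Prop := S^T = - S.

Definition rot (g : Eucl) : 'M[R]_d := g.1.
Definition act (g : Eucl) (x : 'cV[R]_d) : 'cV[R]_d := g.1 *m x + g.2.
Definition emul (g h : Eucl) : Eucl := (g.1 *m h.1, g.2 + g.1 *m h.2).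
Definition eid : Eucl := (1%:M, 0).
Definition einv (g : Eucl) : Eucl := (invmx g.1, - (invmx g.1 *m g.2)).
Definition epow (g : Eucl) (N : nat) : Eucl := iter N (emul g) eid.

Definition sqnorm (v : 'cV[R]_d) : R := \sum_i (v i 0) ^+ 2.

Definition subgroup (G : Eucl -> Prop) : Prop :=
  [/\ G eid, (forall g h, G g -> G h -> G (emul g h)) &
      (forall g, G g -> G (einv g))].

Definition discrete_orbits (G : Eucl -> Prop) : Prop :=
  forall x g, G g -> exists2 e : R, 0 < e &
    forall h, G h -> sqnorm (act h x - act g x) < e -> act h x = act g x.

Definition space_group (G : Eucl -> Prop) : Prop :=
  [/\ forall g, G g -> orthogonal g.1,
      subgroup G, discrete_orbits G &
      exists B : 'M[R]_d, B \in unitmx /\ forall i, G (1%:M, col i B)].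

Definition transl (G : Eucl -> Prop) (g : Eucl) : Prop := G g /\ g.1 = 1%:M.
Definition TN (G : Eucl -> Prop) (N : nat) (g : Eucl) : Prop :=
  exists2 t, transl G t & g = epow t N.

Definition normal_sub (G H : Eucl -> Prop) : Prop :=
  [/\ forall h, H h -> G h, subgroup H &
      forall g h, G g -> H h -> H (emul (emul g h) (einv g))].

Definition inM (G : Eucl -> Prop) (N : nat) : Prop :=
  (0 < N)%N /\ normal_sub G (TN G N).

Definition reps (G : Eucl -> Prop) (N : nat) (C : seq Eucl) : Prop :=
  [/\ uniq C, (forall c, c \in C -> G c),
      (forall g, G g -> exists2 c, c \in C & exists2 t, TN G N t & g = emul c t) &
      (forall c c', c \in C -> c' \in C ->
        (exists2 t, TN G N t & c' = emul c t) -> c = c')].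

(* maps u : G -> R^d are represented by functions on Eucl (values off G irrelevant) *)
Definition periodic (G : Eucl -> Prop) (N : nat) (u : Eucl -> 'cV[R]_d) : Prop :=
  forall t g, TN G N t -> G g -> u (emul t g) = u g.

Definition Uper (G : Eucl -> Prop) (u : Eucl -> 'cV[R]_d) : Prop :=
  exists2 N, inM G N & periodic G N u.

Definition Utrans (G : Eucl -> Prop) (u : Eucl -> 'cV[R]_d) : Prop :=
  exists a : 'cV[R]_d, forall g, G g -> rot g *m u g = a.

Definition Uiso (x0 : 'cV[R]_d) (Rs : seq Eucl) (v : Eucl -> 'cV[R]_d) : Prop :=
  exists a : 'cV[R]_d, exists2 S : 'M[R]_d, skew S &
    forall h, h \in Rs -> rot h *m v h = a + S *m (act h x0 - x0).

Definition distsq (x0 : 'cV[R]_d) (Rs : seq Eucl) (u : Eucl -> 'cV[R]_d) (g : Eucl) : R :=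
  inf [set r | exists2 v, Uiso x0 Rs v &
         r = \sum_(h <- undup Rs) sqnorm (u (emul g h) - v h)].

Definition dist (x0 : 'cV[R]_d) (Rs : seq Eucl) (u : Eucl -> 'cV[R]_d) (g : Eucl) : R :=
  Num.sqrt (distsq x0 Rs u g).

Definition normR (x0 : 'cV[R]_d) (Rs : seq Eucl) (C : seq Eucl) (u : Eucl -> 'cV[R]_d) : R :=
  Num.sqrt ((size C)%:R^-1 * \sum_(g <- C) (dist x0 Rs u g) ^+ 2).

Definition aff (P : 'cV[R]_d -> Prop) (x : 'cV[R]_d) : Prop :=
  exists (n : nat) (p : 'I_n -> 'cV[R]_d) (l : 'I_n -> R),
    [/\ forall i, P (p i), \sum_i l i = 1 & x = \sum_i l i *: p i].

Definition orbit_of (Rs : Eucl -> Prop) (x0 : 'cV[R]_d) (y : 'cV[R]_d) : Prop :=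
  exists2 g, Rs g & y = act g x0.

Inductive gen (Rs : seq Eucl) : Eucl -> Prop :=
  | gen_id : gen Rs eid
  | gen_in g : g \in Rs -> gen Rs g
  | gen_mul g h : gen Rs g -> gen Rs h -> gen Rs (emul g h)
  | gen_inv g : gen Rs g -> gen Rs (einv g).

Definition property1 (G : Eucl -> Prop) (x0 : 'cV[R]_d) (Rs : seq Eucl) : Prop :=
  eid \in Rs /\
  forall y, aff (orbit_of (fun g => g \in Rs) x0) y <-> aff (orbit_of G x0) y.

Definition property2 (G : Eucl -> Prop) (x0 : 'cV[R]_d) (Rs : seq Eucl) : Prop :=
  exists (R1 R2 : seq Eucl),
    [/\ (forall g, g \in R1 -> G g) /\ (forall g, g \in R2 -> G g),
        eid \in R1, (forall g, G g <-> gen R1 g),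
        property1 G x0 R2 &
        (forall g h, g \in R1 -> h \in R2 -> emul g h \in Rs)].

End Euclid.

(* Main.v *)
Require Import Defs.
From mathcomp Require Import all_boot all_order all_algebra.
From mathcomp Require Import boolp classical_sets reals.
Import Order.TTheory GRing.Theory Num.Theory.
Local Open Scope ring_scope.
Local Open Scope classical_set_scope.
Lemma closed_lin (R : realType) (p m : nat) (L : 'rV[R]_p -> 'rV[R]_m) :
  (forall c x y, L (c *: x + y) = c *: L x + L y) ->
  forall y, (forall e : R, 0 < e -> exists x, forall j, `|(y - L x) 0 j| < e) ->
  exists x, y = L x.
Proof.
move=> Llin y Hy.
have L0 : L 0 = 0.
  have h := Llin 1 0 0; rewrite scaler0 addr0 scale1r in h.
  by apply: (addrI (L 0)); rewrite addr0 -h.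
pose M := \matrix_(k < p) L 'e_k.
have LM : forall x, L x = x *m M.
  move=> x; rewrite mulmx_sum_row {1}(row_sum_delta x).
  apply: (big_rec2 (fun a b => L a = b)); first exact: L0.
  by move=> i a b _ <-; rewrite Llin rowK.
pose K := cokermx M.
suff z0 : y *m K = 0.
  have : (y <= M)%MS by rewrite submxE z0.
  by case/submxP => D ->; exists D; rewrite LM.
apply/matrixP => i j; rewrite [RHS]mxE.
pose C : R := \sum_k `|K k j|.
have C0 : 0 <= C by apply: sumr_ge0 => k _.
have bnd : forall e, 0 < e -> `|(y *m K) i j| <= e * C.
  move=> e e0; have [x Hx] := Hy e e0.
  have -> : (y *m K) i j = ((y - L x) *m K) i j.
    by rewrite mulmxBl LM -mulmxA mulmx_coker mulmx0 subr0.
  rewrite !mxE (le_trans (ler_norm_sum _ _ _)) // /C mulr_sumr.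
  apply: ler_sum => k _; rewrite normrM ler_wpM2r //.
  by rewrite ord1; apply/ltW/Hx.
apply/eqP; rewrite -normr_eq0; apply/eqP.
move: bnd; set z := `|(y *m K) i j| => bnd.
have zge : 0 <= z := normr_ge0 _.
have [zp|] := ltrP 0 z; last by move=> h; apply/le_anti; rewrite h zge.
have C1 : 0 < C + 1 by rewrite ltr_wpDl.
have := bnd (z / (C + 1)) (divr_gt0 zp C1).
rewrite mulrAC ler_pdivlMr // => h.
by move: h; rewrite mulrDr mulr1 gerDl leNgt zp.
Qed.
Section Basics.
Variables (R : realType) (d : nat).
Implicit Types g h k : Eucl R d.

Lemma emulA g h k : emul (emul g h) k = emul g (emul h k).
Proof.
by rewrite /emul /= !mulmxA mulmxDr addrA mulmxA.
Qed.

Lemma emul1g g : emul (eid R d) g = g.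
Proof. by case: g => A b; rewrite /emul /= !mul1mx add0r. Qed.

Lemma emulg1 g : emul g (eid R d) = g.
Proof. by case: g => A b; rewrite /emul /= mulmx1 mulmx0 addr0. Qed.

Lemma emulVg g : g.1 \in unitmx -> emul (einv g) g = eid R d.
Proof.
by case: g => A b /= u; rewrite /emul /einv /eid /= mulVmx // addNr.
Qed.

Lemma emulgV g : g.1 \in unitmx -> emul g (einv g) = eid R d.
Proof.
case: g => A b /= u; rewrite /emul /einv /eid /= mulmxV // mulmxN mulmxA mulmxV //.
by rewrite mul1mx subrr.
Qed.

Lemma act_mul g h x : act (emul g h) x = act g (act h x).
Proof. by rewrite /act /emul /= mulmxDr mulmxA [g.2 + _]addrC addrA. Qed.

Lemma act_eid x : act (eid R d) x = x.
Proof. by rewrite /act /= mul1mx addr0. Qed.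

Lemma act_comb g n (l : 'I_n -> R) (p : 'I_n -> 'cV[R]_d) :
  \sum_i l i = 1 -> act g (\sum_i l i *: p i) = \sum_i l i *: act g (p i).
Proof.
move=> l1; rewrite /act mulmx_sumr.
rewrite [RHS](eq_bigr (fun i => l i *: (g.1 *m p i) + l i *: g.2)); last first.
  by move=> i _; rewrite scalerDr.
rewrite big_split /= -scaler_suml l1 scale1r; congr (_ + _).
by apply: eq_bigr => i _; rewrite scalemxAr.
Qed.

Lemma orth_unit (A : 'M[R]_d) : Defs.orthogonal A -> A \in unitmx.
Proof. by rewrite /Defs.orthogonal => /mulmx1_unit [_ ->]. Qed.

Lemma orth_invmx (A : 'M[R]_d) : Defs.orthogonal A -> invmx A = A^T.
Proof.
move=> o; have u := orth_unit _ o.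
by rewrite -[RHS]mulmx1 -(mulmxV u) mulmxA o mul1mx.
Qed.

Lemma orth_C (A : 'M[R]_d) : Defs.orthogonal A -> A *m A^T = 1%:M.
Proof. by move=> o; apply: mulmx1C. Qed.

End Basics.

Lemma sqnorm_ge0 (R : realType) d (v : 'cV[R]_d) : 0 <= sqnorm v.
Proof. by apply: sumr_ge0 => i _; apply: sqr_ge0. Qed.

Lemma sqnorm_entry (R : realType) d (v : 'cV[R]_d) i : v i 0 ^+ 2 <= sqnorm v.
Proof.
rewrite /sqnorm (bigD1 i) //= lerDl; apply: sumr_ge0 => j _; exact: sqr_ge0.
Qed.

Lemma sum_entry (R : realType) (T : eqType) (s : seq T) (F : T -> R) x :
  uniq s -> x \in s -> (forall y, 0 <= F y) -> F x <= \sum_(y <- s) F y.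
Proof.
move=> us xs F0; rewrite (bigD1_seq x) //= lerDl; exact: sumr_ge0.
Qed.

Lemma abs_lt_of_sq (R : realType) (a e : R) : 0 < e -> a ^+ 2 < e ^+ 2 -> `|a| < e.
Proof.
move=> e0 h; rewrite ltNge; apply/negP => le.
have := ler_pM (ltW e0) (ltW e0) le le.
by rewrite -expr2 -normrM normrM -expr2 real_normK ?num_real // leNgt h.
Qed.

Section Dist0.
Variables (R : realType) (d : nat) (x0 : 'cV[R]_d) (Rs : seq (Eucl R d)).
Hypothesis orthRs : forall h, h \in Rs -> Defs.orthogonal h.1.
Variables (u : Eucl R d -> 'cV[R]_d) (g : Eucl R d).

Let n := size (undup Rs).
Let hk (k : 'I_n) := nth (eid R d) (undup Rs) k.
Let aof (x : 'rV[R]_(d + d * d)) : 'cV[R]_d := (lsubmx x)^T.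
Let Sof (x : 'rV[R]_(d + d * d)) : 'M[R]_d := vec_mx (rsubmx x).
Let colF (x : 'rV[R]_(d + d * d)) k :=
  (Defs.rot (hk k))^T *m (aof x + Sof x *m (act (hk k) x0 - x0)).
Let F (x : 'rV[R]_(d + d * d)) : 'M[R]_(n, d) :=
  \matrix_(k, i) (colF x k i 0).
Let L x := mxvec (F x).
Let Y : 'M[R]_(n, d) := \matrix_(k, i) (u (emul g (hk k)) i 0).

Lemma hk_in k : hk k \in Rs.
Proof. by rewrite -mem_undup mem_nth. Qed.

Lemma L_lin c x y : L (c *: x + y) = c *: L x + L y.
Proof.
rewrite /L -linearZ -linearD; congr mxvec.
have cl : forall k, colF (c *: x + y) k = c *: colF x k + colF y k.
  have aL : aof (c *: x + y) = c *: aof x + aof y by rewrite /aof !linearP.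
  have SL : Sof (c *: x + y) = c *: Sof x + Sof y by rewrite /Sof !linearP.
  move=> k; rewrite /colF aL SL.
  move: (act (hk k) x0 - x0) (Defs.rot (hk k))^T => w A.
  rewrite mulmxDl -scalemxAl !mulmxDr -!scalemxAr scalerDr.
  by rewrite addrACA.
apply/matrixP => k i; rewrite mxE cl.
by rewrite !mxE.
Qed.

Lemma dist0_iso :
  distsq x0 Rs u g = 0 ->
  exists a : 'cV[R]_d, exists S : 'M[R]_d,
    forall h, h \in Rs -> Defs.rot h *m u (emul g h) = a + S *m (act h x0 - x0).
Proof.
move=> d0.
have [x Hx] : exists x, mxvec Y = L x.
  apply: closed_lin; first exact: L_lin.
  move=> e e0.
  have ne : [set r | exists2 v, Uiso x0 Rs v &
         r = \sum_(h <- undup Rs) sqnorm (u (emul g h) - v h)] !=set0.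
    exists (\sum_(h <- undup Rs) sqnorm (u (emul g h) - 0)); exists (fun _ => 0) => //.
    exists 0; exists 0; first by rewrite /Defs.skew trmx0 oppr0.
    by move=> h _; rewrite mulmx0 mul0mx addr0.
  have := inf_lt ne; move: d0; rewrite /distsq => -> /(_ (e ^+ 2) (exprn_gt0 2 e0)).
  move=> [r [v [a0 [S0 _ Hv]] ->] rlt].
  exists (row_mx a0^T (mxvec S0)) => j.
  have aE : aof (row_mx a0^T (mxvec S0)) = a0 by rewrite /aof row_mxKl trmxK.
  have SE : Sof (row_mx a0^T (mxvec S0)) = S0 by rewrite /Sof row_mxKr mxvecK.
  case: (mxvec_indexP j) => k i.
  rewrite /L -linearB mxvecE.
  have Fv : F (row_mx a0^T (mxvec S0)) = \matrix_(k, i) (v (hk k) i 0).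
    apply/matrixP => k' i'; rewrite /F [LHS]mxE [RHS]mxE /colF aE SE.
    by rewrite -Hv ?hk_in // mulmxA /Defs.rot orthRs ?hk_in // mul1mx.
  rewrite Fv !mxE.
  have -> : u (emul g (hk k)) i 0 - v (hk k) i 0 = (u (emul g (hk k)) - v (hk k)) i 0.
    by rewrite !mxE.
  apply: abs_lt_of_sq => //.
  apply: le_lt_trans; first exact: sqnorm_entry.
  apply: le_lt_trans rlt.
  apply: (sum_entry _ _ _ (fun h => sqnorm (u (emul g h) - v h))).
  - exact: undup_uniq.
  - exact: mem_nth.
  - by move=> y; exact: sqnorm_ge0.
exists (aof x), (Sof x) => h hR.
have hu : h \in undup Rs by rewrite mem_undup.
pose k : 'I_n := Ordinal (etrans (index_mem h (undup Rs)) hu).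
have hkE : hk k = h by rewrite /hk /= nth_index.
have YF := can_inj mxvecK Hx.
have -> : u (emul g h) = (Defs.rot h)^T *m (aof x + Sof x *m (act h x0 - x0)).
  apply/matrixP => i j; rewrite ord1.
  by have := congr1 (fun M : 'M_(n, d) => M k i) YF; rewrite !mxE hkE.
by rewrite mulmxA orth_C ?mul1mx //; apply: orthRs.
Qed.

End Dist0.

Lemma epow_transl (R : realType) d (t : Eucl R d) N :
  t.1 = 1%:M -> epow t N = (1%:M, t.2 *+ N).
Proof.
move=> t1; elim: N => [|N IH]; first by rewrite /epow /= mulr0n.
rewrite /epow iterS -/(epow t N) IH /emul t1 mulmx1 mul1mx.
by rewrite mulrS.
Qed.

Section Main.
Variables (R : realType) (d : nat) (G : Eucl R d -> Prop) (x0 : 'cV[R]_d)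
  (Rs : seq (Eucl R d)).
Hypothesis sgG : space_group G.

Lemma orthG g : G g -> Defs.orthogonal g.1.
Proof. by case: sgG => + _ _ _; apply. Qed.

Lemma G_eid : G (eid R d).
Proof. by case: sgG => _ [] . Qed.

Lemma G_mul g h : G g -> G h -> G (emul g h).
Proof. by case: sgG => _ [] _ + _ _ _; apply. Qed.

Lemma G_inv g : G g -> G (einv g).
Proof. by case: sgG => _ [] _ _ + _ _; apply. Qed.

Lemma unitG g : G g -> g.1 \in unitmx.
Proof. by move=> Gg; apply: orth_unit; apply: orthG. Qed.

Lemma TN1 t : TN G 1 t <-> transl G t.
Proof.
split; first by case=> t' tt' ->; rewrite /epow /= emulg1.
by move=> tt; exists t => //; rewrite /epow /= emulg1.
Qed.

Lemma inM1 : inM G 1.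
Proof.
split => //; split.
- by move=> h /TN1 [].
- split.
  + by apply/TN1; split; [exact: G_eid|].
  + move=> g h /TN1 [Gg g1] /TN1 [Gh h1]; apply/TN1; split; first exact: G_mul.
    by rewrite /emul /= g1 h1 mulmx1.
  + move=> g /TN1 [Gg g1]; apply/TN1; split; first exact: G_inv.
    by rewrite /einv /= g1 invmx1.
- move=> g h Gg /TN1 [Gh h1]; apply/TN1; split.
    by apply: G_mul; [apply: G_mul|apply: G_inv].
  by rewrite /emul /einv /= h1 mulmx1 mulmxV // unitG.
Qed.

Lemma Uper_of_Utrans u : Utrans G u -> Uper G u.
Proof.
case=> a Ha; exists 1%N; first exact: inM1.
move=> t g /TN1 [Gt t1] Gg.
have r : Defs.rot (emul t g) = g.1 by rewrite /Defs.rot /emul /= t1 mul1mx.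
have := Ha _ (G_mul _ _ Gt Gg); rewrite -(Ha _ Gg) r /Defs.rot => e.
by rewrite -[LHS]mul1mx -(orthG _ Gg) -mulmxA e mulmxA (orthG _ Gg) mul1mx.
Qed.

Lemma distsq_ge0 u g : 0 <= distsq x0 Rs u g.
Proof.
rewrite /distsq; apply: lb_le_inf.
  exists (\sum_(h <- undup Rs) sqnorm (u (emul g h) - 0)); exists (fun _ => 0) => //.
  exists 0; exists 0; first by rewrite /Defs.skew trmx0 oppr0.
  by move=> h _; rewrite mulmx0 mul0mx addr0.
by move=> r [v _ ->]; apply: sumr_ge0 => h _; exact: sqnorm_ge0.
Qed.

Lemma distsq_iso0 u g v : Uiso x0 Rs v ->
  (forall h, h \in Rs -> u (emul g h) = v h) -> distsq x0 Rs u g = 0.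
Proof.
move=> Hv Huv; apply/le_anti; rewrite distsq_ge0 andbT /distsq.
apply: ge_inf.
  exists 0 => r [v' _ ->]; apply: sumr_ge0 => h _; exact: sqnorm_ge0.
exists v => //; rewrite big1_seq // => h /andP[_]; rewrite mem_undup => hin.
rewrite Huv // subrr /sqnorm big1 // => i _; by rewrite mxE expr0n.
Qed.

Lemma normR0 C u : (exists c, c \in C) ->
  (normR x0 Rs C u = 0 <-> forall c, c \in C -> distsq x0 Rs u c = 0).
Proof.
move=> [c0 c0C].
have sz : (0 < size C)%N by case: C c0C.
have dE : forall c, dist x0 Rs u c ^+ 2 = distsq x0 Rs u c.
  by move=> c; rewrite /dist sqr_sqrtr // distsq_ge0.
rewrite /normR; under eq_bigr do rewrite dE.
split.
- move/eqP; rewrite sqrtr_eq0 pmulr_rle0 ?invr_gt0 ?ltr0n // => h.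
  have h0 : \sum_(g <- C) distsq x0 Rs u g = 0.
    by apply/le_anti; rewrite h sumr_ge0 // => c _; exact: distsq_ge0.
  move/eqP: h0; rewrite psumr_eq0; last by move=> c _; exact: distsq_ge0.
  by move/allP => H c cC; apply/eqP; have := H c cC.
- move=> H; rewrite big1_seq ?mulr0 ?sqrtr0 // => c /andP[_ cC]; exact: H.
Qed.

Hypothesis RsG : forall h, h \in Rs -> G h.

Lemma rot_emul (g h : Eucl R d) : Defs.rot (emul g h) = g.1 *m h.1.
Proof. by []. Qed.

Lemma iso_all N C u : inM G N -> reps G N C -> periodic G N u ->
  (forall c, c \in C -> exists (a : 'cV[R]_d) (S : 'M[R]_d), forall h, h \in Rs ->
      Defs.rot h *m u (emul c h) = a + S *m (act h x0 - x0)) ->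
  forall g, G g -> exists (a : 'cV[R]_d) (S : 'M[R]_d), forall h, h \in Rs ->
      Defs.rot h *m u (emul g h) = a + S *m (act h x0 - x0).
Proof.
move=> [N0 [_ _ nor]] [_ CG cover _] per HC g Gg.
have [c cC [t tT ->]] := cover g Gg.
have Gc := CG c cC.
have [a [S HS]] := HC c cC.
exists a, S => h hR.
have -> : emul (emul c t) h = emul (emul (emul c t) (einv c)) (emul c h).
  by rewrite [RHS]emulA -(emulA _ _ (einv c)) emulVg ?emul1g // unitG.
rewrite per; first exact: HS.
  exact: nor.
by apply: G_mul => //; apply: RsG.
Qed.

Lemma Utrans_dist0 u c : Utrans G u -> G c -> distsq x0 Rs u c = 0.
Proof.
case=> a0 Ha Gc.
apply: (distsq_iso0 _ _ (fun h => u (emul c h))) => //.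
exists ((Defs.rot c)^T *m a0), 0; first by rewrite /Defs.skew trmx0 oppr0.
move=> h hR; rewrite mul0mx addr0 -(Ha _ (G_mul _ _ Gc (RsG _ hR))) rot_emul.
by rewrite /Defs.rot !mulmxA (orthG _ Gc) mul1mx.
Qed.

Section Geo.
Variables (R1 R2 : seq (Eucl R d)).
Hypothesis eR1 : eid R d \in R1.
Hypothesis genG : forall g, G g <-> gen R1 g.
Hypothesis P1 : property1 G x0 R2.
Hypothesis R12 : forall g h, g \in R1 -> h \in R2 -> emul g h \in Rs.
Variable u : Eucl R d -> 'cV[R]_d.
Hypothesis isoG : forall g, G g -> exists (a : 'cV[R]_d) (S : 'M[R]_d),
  forall h, h \in Rs -> Defs.rot h *m u (emul g h) = a + S *m (act h x0 - x0).

Let w k := Defs.rot k *m u k.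
Let E := aff (orbit_of G x0).

Lemma R2Rs h : h \in R2 -> h \in Rs.
Proof. by move=> hR; have := R12 _ _ eR1 hR; rewrite emul1g. Qed.

Lemma phi_ex g : G g -> exists Phi : Eucl R d,
  forall h, h \in Rs -> w (emul g h) = act Phi (act (emul g h) x0).
Proof.
move=> Gg; have [a [S HS]] := isoG _ Gg.
exists (g.1 *m S *m g.1^T, g.1 *m a - g.1 *m S *m g.1^T *m act g x0) => h hR.
rewrite /w rot_emul -mulmxA HS // act_mul.
move: (act h x0) => y; rewrite /act /=.
rewrite addrCA -mulmxBr opprD addrACA subrr addr0 -mulmxBr.
rewrite -!mulmxA (mulmxA g.1^T) (orthG _ Gg) mul1mx.
by rewrite mulmxDr addrC.
Qed.

Lemma E_orbit g : G g -> E (act g x0).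
Proof.
move=> Gg; exists 1%N, (fun _ => act g x0), (fun _ => 1); split.
- by move=> _; exists g.
- by rewrite big_ord1.
- by rewrite big_ord1 scale1r.
Qed.

Lemma E_act k y : G k -> E y -> E (act k y).
Proof.
move=> Gk [n [p [l [Hp l1 ->]]]].
exists n, (fun i => act k (p i)), l; split => //.
- move=> i; have [g Gg ->] := Hp i; exists (emul k g); first exact: G_mul.
  by rewrite act_mul.
- by rewrite act_comb.
Qed.

Lemma agree k Phi Psi : G k ->
  (forall h, h \in R2 -> act Phi (act k (act h x0)) = act Psi (act k (act h x0))) ->
  forall y, E y -> act Phi y = act Psi y.
Proof.
move=> Gk HA y Ey.
have Ez : E (act (einv k) y) by apply: E_act => //; apply: G_inv.
have [n [p [l [Hp l1 hz]]]] := (proj2 P1 _).2 Ez.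
have -> : y = act k (act (einv k) y) by rewrite -act_mul emulgV ?unitG // act_eid.
rewrite hz act_comb // !act_comb //.
by apply: eq_bigr => i _; have [h hR ->] := Hp i; rewrite HA.
Qed.
Variable Phi0 : Eucl R d.
Hypothesis HPhi0 : forall h, h \in Rs -> w h = act Phi0 (act h x0).

Let Q k := forall h, h \in R2 -> w (emul k h) = act Phi0 (act (emul k h) x0).

Lemma Q_step k r : G k -> r \in R1 -> (Q k <-> Q (emul k r)).
Proof.
move=> Gk rR.
have Gr : G r by apply/genG; apply: gen_in.
have [Phi HPhi] := phi_ex _ Gk.
have fromE : (forall y, E y -> act Phi y = act Phi0 y) -> Q k /\ Q (emul k r).
  move=> EqP; split => h hR.
    rewrite HPhi ?R2Rs // EqP //; apply: E_orbit; apply: G_mul => //.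
    by apply: RsG; apply: R2Rs.
  rewrite emulA HPhi ?R12 // EqP //; apply: E_orbit; apply: G_mul => //.
  exact: RsG _ (R12 _ _ rR hR).
split => HQ.
- apply: (proj2 (fromE _)); apply: (agree k) => // h hR.
  by rewrite -(act_mul _ _ k h x0) -HPhi ?R2Rs // HQ.
- apply: (proj1 (fromE _)); apply: (agree (emul k r)); first exact: G_mul.
  move=> h hR; rewrite -(act_mul _ _ (emul k r) h x0) -HQ // emulA -HPhi ?R12 //.
Qed.

Lemma Q_gen g : gen R1 g -> forall k, G k -> (Q k <-> Q (emul k g)).
Proof.
elim=> {g} [|g gR|g h Hg IHg Hh IHh|g Hg IHg] k Gk.
- by rewrite emulg1.
- exact: Q_step.
- have Gg : G g by apply/genG.
  rewrite -emulA; split => H.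
    by apply/(IHh _ (G_mul _ _ Gk Gg))/(IHg _ Gk).
  by apply/(IHg _ Gk)/(IHh _ (G_mul _ _ Gk Gg)).
- have Gg : G g by apply/genG.
  have := IHg (emul k (einv g)) (G_mul _ _ Gk (G_inv _ Gg)).
  rewrite emulA emulVg ?unitG // emulg1.
  by move=> [H1 H2]; split.
Qed.

Lemma w_affine g : G g -> w g = act Phi0 (act g x0).
Proof.
move=> Gg.
have Q0 : Q (eid R d).
  by move=> h hR; rewrite emul1g; apply: HPhi0; apply: R2Rs.
have Hg : gen R1 g by apply/genG.
have := Q_gen _ Hg _ G_eid; rewrite emul1g => -[/(_ Q0) Qg _].
by have := Qg _ (proj1 P1); rewrite emulg1.
Qed.

Variable N : nat.
Hypothesis MN : inM G N.
Hypothesis perN : periodic G N u.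

Lemma S0_zero : Phi0.1 = 0.
Proof.
have St : forall t, transl G t -> Phi0.1 *m t.2 = 0.
  move=> t [Gt t1].
  have TT : TN G N (epow t N) by exists t.
  have GT : G (epow t N) by case: MN => _ [+ _ _]; apply.
  have uT : u (epow t N) = u (eid R d).
    by rewrite -[epow t N]emulg1; apply: perN => //; exact: G_eid.
  have := w_affine _ GT; rewrite /w uT epow_transl // /Defs.rot /= mul1mx.
  have := w_affine _ G_eid; rewrite /w /Defs.rot /= mul1mx => ->.
  rewrite act_eid /act /= mul1mx mulmxDr => /addIr e.
  have e2 : Phi0.1 *m (t.2 *+ N) = 0.
    by apply: (addrI (Phi0.1 *m x0)); rewrite addr0 -e.
  move: e2; rewrite -scaler_nat -scalemxAr => /eqP; rewrite scaler_eq0 pnatr_eq0.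
  case/orP => /eqP // N0; by case: MN; rewrite N0.
case: sgG => _ _ _ [B [Bu HB]].
have PB : Phi0.1 *m B = 0.
  apply/matrixP => i j.
  have := St (1%:M, col j B) (conj (HB j) erefl).
  rewrite /= colE mulmxA -colE => /matrixP/(_ i 0).
  move=> h; apply: etrans (etrans _ h) _; [by rewrite [RHS]mxE | by rewrite !mxE].
by rewrite -[Phi0.1]mulmx1 -(mulmxV Bu) mulmxA PB mul0mx.
Qed.

Lemma Utrans_final : Utrans G u.
Proof.
exists Phi0.2 => g Gg.
by have := w_affine _ Gg; rewrite /w /act S0_zero mul0mx add0r.
Qed.

End Geo.

End Main.

Theorem corollary3p29 (R : realType) (d : nat) (G : Eucl R d -> Prop)
    (x0 : 'cV[R]_d) (Rs : seq (Eucl R d)) :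
  space_group G ->
  (forall g h, G g -> G h -> act g x0 = act h x0 -> g = h) ->
  (forall h, h \in Rs -> G h) ->
  property2 G x0 Rs ->
  (forall u, Utrans G u -> Uper G u) /\
  (forall (N : nat) (C : seq (Eucl R d)) (u : Eucl R d -> 'cV[R]_d),
     inM G N -> reps G N C -> periodic G N u ->
     (normR x0 Rs C u = 0 <-> Utrans G u)).
Proof.
move=> sgG _ RsG [R1 [R2 [[R1G R2G] eR1 genG P1 R12]]].
split; first exact: Uper_of_Utrans.
move=> N C u MN repC per.
have Cne : exists c, c \in C.
  case: repC => _ _ cover _; have [c cC _] := cover _ (G_eid _ _ _ sgG).
  by exists c.
have orthRs : forall h, h \in Rs -> Defs.orthogonal h.1.
  by move=> h hR; apply: (orthG _ _ _ sgG); apply: RsG.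
apply: iff_trans (@normR0 R d x0 Rs C u Cne) _.
split.
- move=> H0.
  have isoC := fun c cC => @dist0_iso R d x0 Rs orthRs u c (H0 c cC).
  have isoG := @iso_all R d G x0 Rs sgG RsG N C u MN repC per isoC.
  have [Phi0 HPhi0] := @phi_ex R d G x0 Rs sgG u isoG _ (G_eid _ _ _ sgG).
  apply: (@Utrans_final R d G x0 Rs sgG RsG R1 R2 eR1 genG P1 R12 u isoG Phi0 _ N MN per).
  by move=> h hR; have := HPhi0 h hR; rewrite emul1g.
- move=> Ht c cC; apply: (@Utrans_dist0 R d G x0 Rs sgG RsG u c Ht).
  by case: repC => _ CG _ _; apply: CG.
Qed.
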